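(* Let $G$ be a connected bipartite plane graph with color classes black and white, and let $s_0,s_1$ be two vertices on its outer face. Then the generalized strong labelings of $G$ with special vertices $s_0,s_1$ are in bijection with the orientations of $S_G$ whose outdegrees are: $0$ at $s_0$ and $s_1$, $1$ at every edge-vertex, and $2$ at every other vertex (all other original vertices and all face-vertices).
   Context: An angle is an incidence of a vertex with a face. For an edge $e$ with white end $w$ and black end $b$, traverse $e$ from $w$ to $b$ and let $r_w,r_b$ be the labels of the angles at $w,b$ in the face to the right and $l_w,l_b$ those in the face to the left. A generalized strong labeling of $G$ is a map from angles to $\{0,1\}$ such that: (G0) all angles at $s_i$ are labeled $i$; (G1) for each vertex $v\notin\{s_0,s_1\}$ the labels around $v$ form one non-empty cyclic interval of $1$s and one non-empty cyclic interval of $0$s; (G2$^+$) for each edge the labels form one of six patterns: $r_w=r_b=c$ and $(l_w,l_b)\in\{(1-c,c),(c,1-c)\}$ for some $c\in\{0,1\}$ (four patterns), or $r_w=l_b=p$ and $r_b=l_w=1-p$ for some $p\in\{0,1\}$ (two patterns); (G3$^+$) each face (including the outer face) has, along its boundary walk, exactly one pair of consecutive angles (the angles at the two ends of an edge on the side of that face) both labeled $0$ and exactly one such pair both labeled $1$; moreover, the edge on the outer face boundary which contains $s_0$ and has the outer face to its right when traversed from its white end to its black end has both its outer-face labels equal to $0$. The graph $S_G$ has as vertices the vertices, the edges (edge-vertices) and the faces (face-vertices, including the outer face) of $G$; each edge-vertex $e=wb$ is adjacent to its two endpoints $w,b$ and to the face-vertex of the face to the right of $e$ when traversed from $w$ to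 $b$; there are no other edges. *)

(* Defs.v *)
(* A connected bipartite plane graph is encoded as a
   genus-0 combinatorial map (rotation system). *)
From mathcomp Require Import all_boot.
Set Implicit Arguments.
Unset Strict Implicit.
Unset Printing Implicit Defensive.

Section PlaneMap.
Variables (V F D : finType).
(* e : dart involution (the two darts/orientations of an edge);
   n : counterclockwise successor of a dart around its tail vertex;
   tail : tail vertex of a dart; face : face to the RIGHT of a dart;
   white : colour of a vertex (true = white, false = black). *)
Variables (e n : D -> D) (tail : D -> V) (face : D -> F) (white : V -> bool).

(* next dart along the boundary walk of the face on the right of d *)
Definition phi (d : D) : D := n (e d).

Definition vadj : rel V :=
  fun u v => [exists d, (tail d == u) && (tail (e d) == v)].

Definition plane_bipartite_map : Prop :=
  (forall d, e (e d) = d) /\ (forall d, e d != d) /\ injective n /\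
  (forall d, tail (n d) = tail d) /\
  (forall d d', tail d = tail d' -> fconnect n d d') /\
  (forall d, face (phi d) = face d) /\
  (forall d d', face d = face d' -> fconnect phi d d') /\
  (forall f, exists d, face d = f) /\
  (forall u v, connect vadj u v) /\
  (* planar: Euler's formula  #V - #E + #F = 2  with #E = #D/2 *)
  ((#|V| + #|F|).*2 = #|D| + 4) /\
  (forall d, white (tail (e d)) != white (tail d)).

(* Angles are identified with darts: the angle of dart d is the corner at
   tail d lying in the face to the right of d (between n^-1 d and d).
   A labeling is lab : {ffun D -> bool}, false = 0, true = 1. *)
Section Labeling.
Variables (outer : F) (s0 s1 : V) (lab : {ffun D -> bool}).

Definition G0 : Prop :=
  forall d, (tail d = s0 -> lab d = false) /\ (tail d = s1 -> lab d = true).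

Definition G1 : Prop :=
  forall v, v != s0 -> v != s1 ->
    exists d, tail d = v /\
      exists i, 0 < i < order n d /\
        forall j, j < order n d -> lab (iter j n d) = (j < i).

(* for the edge with white end w = tail d and black end b = tail (e d):
   r_w = lab d, r_b = lab (phi d), l_w = lab (n d), l_b = lab (e d) *)
Definition G2_pattern (rw rb lw lb : bool) : Prop :=
  (exists c : bool, rw = c /\ rb = c /\
     ((lw = ~~ c /\ lb = c) \/ (lw = c /\ lb = ~~ c))) \/
  (exists p : bool, rw = p /\ lb = p /\ rb = ~~ p /\ lw = ~~ p).

Definition G2 : Prop :=
  forall d, white (tail d) ->
    G2_pattern (lab d) (lab (phi d)) (lab (n d)) (lab (e d)).

(* the consecutive pairs of angles along the boundary walk of face f are
   (lab d, lab (phi d)) for the darts d with face d = f *)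
Definition G3 : Prop :=
  (forall f : F,
     #|[set d | (face d == f) && ~~ lab d && ~~ lab (phi d)]| = 1 /\
     #|[set d | (face d == f) && lab d && lab (phi d)]| = 1) /\
  (exists d, face d = outer /\ white (tail d) /\
     (tail d = s0 \/ tail (e d) = s0) /\
     lab d = false /\ lab (phi d) = false).

Definition gen_strong_labeling : Prop := G0 /\ G1 /\ G2 /\ G3.
End Labeling.

(* The graph S_G: vertices, edges (represented by their dart from the white
   end to the black end) and faces of G. *)
Definition Edart := {d : D | white (tail d)}.
Definition SV := (V + (Edart + F))%type.

Definition sadj (x y : SV) : bool :=
  match x, y with
  | inl v, inr (inl a) | inr (inl a), inl v =>
      (tail (val a) == v) || (tail (e (val a)) == v)
  | inr (inl a), inr (inr f) | inr (inr f), inr (inl a) => face (val a) == f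
  | _, _ => false
  end.

Definition orientation (O : {set SV * SV}) : Prop :=
  (forall x y, (x, y) \in O -> sadj x y) /\
  (forall x y, sadj x y -> ((x, y) \in O) != ((y, x) \in O)).

Definition outdeg (O : {set SV * SV}) (x : SV) : nat := #|[set y | (x, y) \in O]|.

Definition good_orientation (s0 s1 : V) (O : {set SV * SV}) : Prop :=
  orientation O /\
  forall x, outdeg O x =
    match x with
    | inl v => if (v == s0) || (v == s1) then 0 else 2
    | inr (inl _) => 1
    | inr (inr _) => 2
    end.
End PlaneMap.

(* Main.v *)
Require Import Defs.
From mathcomp Require Import all_boot all_algebra zify.
From Stdlib Require Import ClassicalEpsilon ProofIrrelevance.
Set Implicit Arguments.
Unset Strict Implicit.
Unset Printing Implicit Defensive.

Section LinAlg.
Import GRing.Theory.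
Local Open Scope ring_scope.

Definition b2F (b : bool) : 'F_2 := b%:R.

Lemma F2_cases (a : 'F_2) : a = 0 \/ a = 1.
Proof. case: a => [[|[|k]]] H; [left|right|]; try exact: val_inj. by []. Qed.

Lemma F2_add_eq0 (a b : 'F_2) : (a + b == 0) = (a == b).
Proof. by case: (F2_cases a) => ->; case: (F2_cases b) => ->. Qed.

Lemma F2_addK (a : 'F_2) : a + a = 0.
Proof. by case: (F2_cases a) => ->; apply/eqP. Qed.

Lemma b2F_addb a b : b2F (a (+) b) = b2F a + b2F b.
Proof. by case: a; case: b; rewrite /b2F /= ?addr0 ?add0r //; apply/eqP. Qed.

Lemma b2F_inj : injective b2F.
Proof. by case; case => //= /eqP. Qed.

Lemma sum_b2F_card (T : finType) (P : pred T) :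
  \sum_(t | P t) (1 : 'F_2) = b2F (odd #|P|).
Proof.
by rewrite sumr_const /b2F -modn2 (Fp_nat_mod (isT : prime 2)).
Qed.

Lemma sum_ev (T : finType) (G : T -> 'F_2) :
  \sum_(i < #|T|) G (enum_val i) = \sum_t G t.
Proof.
rewrite (reindex (@enum_rank T)) /=; last first.
  by exists enum_val => x _; [rewrite enum_rankK | rewrite enum_valK].
by apply: eq_bigr => t _; rewrite enum_rankK.
Qed.

Lemma rank_const_rows m k (A : 'M['F_2]_(m, k)) :
  (forall i j j', A i j = A i j') -> (\rank A <= 1)%N.
Proof.
move=> Hc; case: k A Hc => [|k] A Hc.
  by apply: leq_trans (rank_leq_col A) _.
have sub : (A <= (const_mx 1 : 'M['F_2]_(1, k.+1)))%MS.
  apply/row_subP => i.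
  have -> : row i A = A i ord0 *: const_mx 1.
    by apply/matrixP => a b; rewrite !mxE mulr1 (Hc i b ord0).
  exact/scalemx_sub/submx_refl.
by apply: leq_trans (mxrankS sub) (rank_leq_row _).
Qed.

Lemma sum_b2F_mul (T : finType) (P : pred T) (G : T -> 'F_2) :
  \sum_t b2F (P t) * G t = \sum_(t | P t) G t.
Proof.
rewrite [RHS]big_mkcond; apply: eq_bigr => t _.
by case: (P t); rewrite /b2F ?mul1r ?mul0r.
Qed.

Lemma sum_pick (T : finType) (a : T) (G : T -> 'F_2) :
  \sum_t b2F (a == t) * G t = G a.
Proof.
rewrite sum_b2F_mul (eq_bigl (fun t => t == a)) ?big_pred1_eq //.
Qed.

Lemma cocycle_solve (X Y C : finType) (src dst : Y -> X) (z : C -> pred Y)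
    (g : Y -> 'F_2) :
  (forall x : X -> 'F_2, (forall y, x (src y) = x (dst y)) -> forall a b, x a = x b) ->
  (forall c v, \sum_(y | z c y) (b2F (src y == v) + b2F (dst y == v)) = 0) ->
  (forall u : C -> 'F_2, (forall y, \sum_(c | z c y) u c = 0) -> forall a b, u a = u b) ->
  (forall c, \sum_(y | z c y) g y = 0) ->
  (#|Y| + 2 <= #|C| + #|X|)%N ->
  exists x : X -> 'F_2, forall y, x (src y) + x (dst y) = g y.
Proof.
move=> conn cyc dep orth cnt.
pose B := \matrix_(i < #|Y|, j < #|X|)
  (b2F (src (enum_val i) == enum_val j) + b2F (dst (enum_val i) == enum_val j)).
pose Z := \matrix_(i < #|C|, j < #|Y|) b2F (z (enum_val i) (enum_val j)).
pose G := \col_(i < #|Y|) g (enum_val i).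
have Bsum (y : Y) (x : X -> 'F_2) :
    \sum_k B (enum_rank y) k * x (enum_val k) = x (src y) + x (dst y).
  under eq_bigr => k _ do rewrite mxE enum_rankK.
  rewrite (sum_ev (fun v => (b2F (src y == v) + b2F (dst y == v)) * x v)).
  under eq_bigr => v _ do rewrite mulrDl.
  by rewrite big_split /= !sum_pick.
have ZB : Z *m B = 0.
  apply/matrixP => i j; rewrite !mxE.
  under eq_bigr => k _ do rewrite !mxE.
  rewrite (sum_ev (fun y => b2F (z (enum_val i) y) *
      (b2F (src y == enum_val j) + b2F (dst y == enum_val j)))).
  by rewrite sum_b2F_mul cyc.
have ZG : Z *m G = 0.
  apply/matrixP => i j; rewrite !mxE.
  under eq_bigr => k _ do rewrite !mxE.
  rewrite (sum_ev (fun y => b2F (z (enum_val i) y) * g y)).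
  by rewrite sum_b2F_mul orth.
have ZM : (Z <= kermx (row_mx B G))%MS.
  by apply/sub_kermxP; rewrite mul_mx_row ZB ZG row_mx0.
have rZ : (#|C| - 1 <= \rank Z)%N.
  have rK : (\rank (kermx Z) <= 1)%N.
    apply: rank_const_rows => i j j'.
    pose u c := kermx Z i (enum_rank c).
    have Hu : forall y, \sum_(c | z c y) u c = 0.
      move=> y.
      move/matrixP: (mulmx_ker Z) => /(_ i (enum_rank y)).
      rewrite [X in X = _]mxE [X in _ = X]mxE => H; apply: (eq_trans _ H).
      under [RHS]eq_bigr => k _ do rewrite [Z _ _]mxE enum_rankK.
      rewrite -sum_b2F_mul -(sum_ev (fun c => b2F (z c y) * u c)).
      by apply: eq_bigr => k _; rewrite /u enum_valK mulrC.
    have := dep u Hu (enum_val j) (enum_val j').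
    by rewrite /u !enum_valK.
  have := mxrank_ker Z; move: rK; have := rank_leq_row Z; lia.
have rB : (#|X| - 1 <= \rank B)%N.
  have rK : (\rank (kermx B^T) <= 1)%N.
    apply: rank_const_rows => i j j'.
    pose x v := kermx B^T i (enum_rank v).
    have Hx : forall y, x (src y) = x (dst y).
      move=> y; apply/eqP; rewrite -F2_add_eq0 -Bsum.
      move/matrixP: (mulmx_ker B^T) => /(_ i (enum_rank y)).
      rewrite [X in X = _]mxE [X in _ = X]mxE => H; apply/eqP; apply: (eq_trans _ H).
      apply: eq_bigr => k _; rewrite [_^T _ _]mxE mulrC /x enum_valK.
      by [].
    have := conn x Hx (enum_val j) (enum_val j').
    by rewrite /x !enum_valK.
  have := mxrank_ker B^T; rewrite mxrank_tr; move: rK; have := rank_leq_col B; lia.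
have rM : (\rank (row_mx B G) <= #|Y| - \rank Z)%N.
  have := mxrankS ZM; rewrite mxrank_ker; have := rank_leq_row (row_mx B G); lia.
have rMB : (\rank (row_mx B G) <= \rank B)%N.
  have := rank_leq_row Z; move: rZ rB rM cnt; lia.
have sBM : (B^T <= (row_mx B G)^T)%MS.
  by rewrite tr_row_mx -addsmxE addsmxSl.
have sGM : (G^T <= (row_mx B G)^T)%MS.
  by rewrite tr_row_mx -addsmxE addsmxSr.
have sMB : ((row_mx B G)^T <= B^T)%MS.
  rewrite -(mxrank_leqif_sup sBM).2 !mxrank_tr eqn_leq rMB andbT.
  by have := mxrankS sBM; rewrite !mxrank_tr.
have /submxP [Dm HD] := submx_trans sGM sMB.
exists (fun v => Dm 0 (enum_rank v)) => y.
move/matrixP: HD => /(_ 0 (enum_rank y)).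
rewrite !mxE enum_rankK => ->.
rewrite -(Bsum y (fun v => Dm 0 (enum_rank v))); apply: eq_bigr => k _.
by rewrite enum_valK mulrC [_^T _ _]mxE.
Qed.

End LinAlg.

Section Main.
Variables (V F D : finType) (e n : D -> D) (tail : D -> V) (face : D -> F)
  (white : V -> bool) (outer : F) (s0 s1 : V).
Hypothesis Hmap : @plane_bipartite_map V F D e n tail face white.
Hypothesis Hs01 : s0 != s1.
Hypothesis Hs0 : exists d, tail d = s0 /\ face d = outer.
Hypothesis Hs1 : exists d, tail d = s1 /\ face d = outer.

Local Notation phi := (@phi D e n).

Ltac dm := case: Hmap => HeK [Heneq [Hninj [Htn [Htc [Hfp [Hfc [Hfs [Hvc [Heu Hbp]]]]]]]]].
Lemma eK d : e (e d) = d. Proof. by dm. Qed.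
Lemma e_neq d : e d != d. Proof. by dm. Qed.
Lemma n_inj : injective n. Proof. by dm. Qed.
Lemma tail_n d : tail (n d) = tail d. Proof. by dm. Qed.
Lemma tail_conn d d' : tail d = tail d' -> fconnect n d d'.
Proof. by dm; apply: Htc. Qed.
Lemma face_phi d : face (phi d) = face d.
Proof. by dm. Qed.
Lemma face_conn d d' : face d = face d' -> fconnect phi d d'.
Proof. by dm; apply: Hfc. Qed.
Lemma face_surj f : exists d, face d = f.
Proof. by dm. Qed.
Lemma vconn u v : connect (@vadj V D e tail) u v.
Proof. by dm. Qed.
Lemma euler : ((#|V| + #|F|).*2 = #|D| + 4)%N.
Proof. by dm. Qed.
Lemma bip d : white (tail (e d)) = ~~ white (tail d).
Proof.
dm; move: (Hbp d).
by case: (white (tail (e d))); case: (white (tail d)).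
Qed.

Lemma e_inj : injective e. Proof. exact: (can_inj eK). Qed.
Lemma phi_inj : injective phi.
Proof. by move=> x y /n_inj /e_inj. Qed.
Lemma tail_phi d : tail (phi d) = tail (e d).
Proof. by rewrite /Defs.phi tail_n. Qed.
Lemma phi_e d : phi (e d) = n d.
Proof. by rewrite /Defs.phi eK. Qed.
Lemma tail_e_neq d : tail (e d) <> tail d.
Proof. by move=> H; have := bip d; rewrite H; case: (white _). Qed.
Lemma tail_e_neqb d : tail (e d) != tail d.
Proof. by apply/eqP; apply: tail_e_neq. Qed.
Lemma white_phi d : white (tail (phi d)) = ~~ white (tail d).
Proof. by rewrite tail_phi bip. Qed.

Lemma dart_const (T : Type) (dl : D -> T) :
  (forall d, dl (n d) = dl d) -> (forall d, dl (phi d) = dl d) ->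
  forall d d', dl d = dl d'.
Proof.
move=> Hn Hp.
have He d : dl (e d) = dl d by rewrite -Hp phi_e Hn.
have Hiter d k : dl (iter k n d) = dl d.
  by elim: k => //= k IH; rewrite Hn.
have Hv d d' : tail d = tail d' -> dl d = dl d'.
  move/tail_conn/iter_findex <-; by rewrite Hiter.
move=> d d'.
have Hpth : forall p u, (forall x, tail x = u -> dl x = dl d) ->
    path (@vadj V D e tail) u p -> forall x, tail x = last u p -> dl x = dl d.
  elim=> [|w p IH] u Hu /=; first by move=> _ x Hx; apply: Hu.
  case/andP=> /existsP [y /andP [/eqP Hy /eqP Hy']] Hpath.
  apply: IH Hpath => x Hx.
  by rewrite (Hv x (e y)) ?Hy' // He Hu.
have /connectP [p Hpath Hlast] := vconn (tail d) (tail d').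
by symmetry; apply: (Hpth p (tail d)) => // x /Hv.
Qed.

Local Notation Ed := (@Edart V D tail white).
Local Notation SVt := (@SV V F D tail white).
Local Notation sadj := (@sadj V F D e tail face white).

Lemma ed_proof d : white (tail (if white (tail d) then d else e d)).
Proof. by case: ifP => // /negbT; rewrite bip. Qed.
Definition ed d : Ed := exist (fun x => white (tail x)) _ (ed_proof d).
Lemma val_ed d : val (ed d) = if white (tail d) then d else e d.
Proof. by []. Qed.
Lemma ed_e d : ed (e d) = ed d.
Proof. by apply: val_inj; rewrite !val_ed bip eK; case: (white _). Qed.
Lemma white_val (a : Ed) : white (tail (val a)). Proof. exact: (proj2_sig a). Qed.
Lemma ed_val (a : Ed) : ed (val a) = a.
Proof. by apply: val_inj; rewrite val_ed white_val. Qed.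
Lemma ed_eq d a : (ed d == a) = (d == val a) || (d == e (val a)).
Proof.
rewrite -(inj_eq val_inj) val_ed; case: ifP => Hw.
  case: (d =P e (val a)) => [Hd|]; last by rewrite orbF.
  by move: Hw; rewrite Hd bip white_val.
case: (d =P val a) => [Hd|_]; first by move: Hw; rewrite Hd white_val.
by rewrite /= -(inj_eq e_inj) eK.
Qed.
Lemma ed_tail d d' : ed d = ed d' -> tail d = tail d' -> d = d'.
Proof.
move=> Hed Ht; have := eqxx (ed d); rewrite {2}Hed ed_eq val_ed.
case: ifP => _ /orP [] /eqP H; rewrite ?eK in H => //;
  by move: (@tail_e_neq d'); rewrite -H Ht.
Qed.

Lemma sadj_sym x y : sadj x y = sadj y x.
Proof. by case: x => [v|[a|f]]; case: y => [w|[b|g]]. Qed.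

Lemma card3 (T : finType) (B : {set T}) y1 y2 y3 :
  uniq [:: y1; y2; y3] -> (forall y, y \in B -> y \in [:: y1; y2; y3]) ->
  #|B| = ((y1 \in B) + (y2 \in B) + (y3 \in B))%N.
Proof.
move=> Hu Hs.
have -> : #|B| = #|filter (fun y => y \in B) [:: y1; y2; y3]|.
  apply: eq_card => y; rewrite mem_filter.
  by case Hy: (y \in B) => //=; rewrite Hs.
rewrite (card_uniqP _) ?filter_uniq // size_filter /=.
by rewrite addn0 addnA.
Qed.

Section Outdeg.
Variable O : {set SVt * SVt}.
Hypothesis Osub : forall x y, (x, y) \in O -> sadj x y.

Lemma outdegV v : outdeg O (inl v) =
  #|[set d | (tail d == v) && ((inl v, inr (inl (ed d))) \in O)]|.
Proof.
rewrite /outdeg.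
have -> : [set y | (inl v, y) \in O] =
    [set (inr (inl (ed d)) : SVt) | d in [set d | (tail d == v) &&
                                ((inl v, inr (inl (ed d))) \in O)]].
  apply/setP => y; rewrite inE; apply/idP/imsetP.
    move=> Hy; have := Osub Hy; case: y Hy => [w|[a|f]] //= Hy.
    case/orP => /eqP Ht.
      by exists (val a); rewrite ?inE ?ed_val ?Ht ?eqxx.
    by exists (e (val a)); rewrite ?inE ?ed_e ?ed_val ?Ht ?eqxx.
  by case=> d; rewrite inE => /andP [_ H] ->.
rewrite card_in_imset // => d d'; rewrite !inE => /andP [/eqP H1 _] /andP [/eqP H2 _] [].
move=> Hed; apply: ed_tail; [exact: val_inj | by rewrite H1 H2].
Qed.

Lemma outdegE (a : Ed) : outdeg O (inr (inl a)) =
  (((inr (inl a), inl (tail (val a))) \in O) +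
   ((inr (inl a), inl (tail (e (val a)))) \in O) +
   ((inr (inl a), inr (inr (face (val a)))) \in O))%N.
Proof.
rewrite /outdeg.
rewrite (@card3 _ _ (inl (tail (val a))) (inl (tail (e (val a)))) (inr (inr (face (val a))))).
- by rewrite !inE.
- rewrite /= andbT !in_cons in_nil orbF negb_or; apply/andP; split => //.
  by apply/eqP => -[] /esym /tail_e_neq.
- move=> y; rewrite inE => /Osub; case: y => [w|[b|g]] //=.
    by case/orP => /eqP <-; rewrite !inE eqxx ?orbT.
  by move=> /eqP <-; rewrite !inE eqxx ?orbT.
Qed.

Lemma outdegF f : outdeg O (inr (inr f)) =
  #|[set a : Ed | (face (val a) == f) && ((inr (inr f), inr (inl a)) \in O)]|.
Proof.
rewrite /outdeg.
have -> : [set y | (inr (inr f), y) \in O] =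
    [set (inr (inl a) : SVt) | a in [set a : Ed | (face (val a) == f) &&
                                ((inr (inr f), inr (inl a)) \in O)]].
  apply/setP => y; rewrite inE; apply/idP/imsetP.
    move=> Hy; have := Osub Hy; case: y Hy => [w|[a|g]] //= Hy Hf.
    by exists a; rewrite // inE Hf Hy.
  by case=> a; rewrite inE => /andP [_ H] ->.
by rewrite card_in_imset // => a b _ _ [].
Qed.
End Outdeg.

Lemma card_Ed (P : pred D) :
  #|[set a : Ed | P (val a)]| = #|[set d | white (tail d) && P d]|.
Proof.
rewrite -(card_imset _ val_inj); apply: eq_card => d; rewrite !inE.
apply/imsetP/andP.
  by case=> a; rewrite inE => Ha ->; rewrite white_val.
by case=> Hw Hp; exists (ed d); rewrite ?inE val_ed Hw.
Qed.

Lemma tail_iter k d : tail (iter k n d) = tail d.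
Proof. by elim: k => //= k IH; rewrite tail_n. Qed.

Lemma iter_inj_lt d i j : i < order n d -> j < order n d ->
  iter i n d = iter j n d -> i = j.
Proof. by move=> Hi Hj H; rewrite -(findex_iter Hi) -(findex_iter Hj) H. Qed.

Lemma tail_iterP d d' : tail d' = tail d ->
  exists2 k, k < order n d & d' = iter k n d.
Proof.
move=> H; have Hc : fconnect n d d' by apply: tail_conn.
by exists (findex n d d'); [apply: findex_max | rewrite iter_findex].
Qed.

Definition trans (lab : {ffun D -> bool}) d := lab d != lab (n d).
Definition mono (lab : {ffun D -> bool}) d := lab d == lab (phi d).

Definition varc lab v (a : Ed) :=
  ((tail (val a) == v) && trans lab (val a)) ||
  ((tail (e (val a)) == v) && trans lab (e (val a))).

Definition arc lab (x y : SVt) : bool :=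
  match x, y with
  | inl v, inr (inl a) => varc lab v a
  | inr (inl a), inl v => ~~ varc lab v a
  | inr (inr f), inr (inl a) => mono lab (val a)
  | inr (inl a), inr (inr f) => ~~ mono lab (val a)
  | _, _ => false
  end.

Definition Olab lab : {set SVt * SVt} := [set p | sadj p.1 p.2 && arc lab p.1 p.2].

Lemma Olab_sub lab x y : (x, y) \in Olab lab -> sadj x y.
Proof. by rewrite inE => /andP []. Qed.

Lemma Olab_orient lab : @orientation V F D e tail face white (Olab lab).
Proof.
split; first exact: Olab_sub.
move=> x y Hxy; rewrite !inE /= Hxy sadj_sym Hxy /=.
case: x Hxy => [v|[a|f]]; case: y => [w|[b|g]] //= _. all: by [case: (varc lab _ _) | case: (mono lab _)].
Qed.

Lemma varc_tail lab d : varc lab (tail d) (ed d) = trans lab d.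
Proof.
rewrite /varc val_ed; case: ifP => _;
by rewrite ?eK eqxx /= ?(negbTE (tail_e_neqb d)) /= ?orbF.
Qed.

Lemma Olab_V lab d : ((inl (tail d), inr (inl (ed d))) \in Olab lab) = trans lab d.
Proof.
rewrite inE /= varc_tail andbC; case: (trans _ _) => //=.
by case: ifP; rewrite ?eK eqxx ?orbT.
Qed.

Lemma Olab_F lab (a : Ed) : ((inr (inr (face (val a))), inr (inl a)) \in Olab lab) = mono lab (val a).
Proof. by rewrite inE /= eqxx. Qed.

Lemma Olab_Ew lab (a : Ed) : ((inr (inl a), inl (tail (val a))) \in Olab lab) = ~~ trans lab (val a).
Proof. by rewrite inE /= eqxx /=; have := varc_tail lab (val a); rewrite ed_val => ->. Qed.

Lemma Olab_Eb lab (a : Ed) : ((inr (inl a), inl (tail (e (val a)))) \in Olab lab) = ~~ trans lab (e (val a)).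
Proof. by rewrite inE /= eqxx orbT /=; have := varc_tail lab (e (val a)); rewrite ed_e ed_val => ->. Qed.

Lemma Olab_Ef lab (a : Ed) : ((inr (inl a), inr (inr (face (val a)))) \in Olab lab) = ~~ mono lab (val a).
Proof. by rewrite inE /= eqxx. Qed.

Lemma G1_count (lab : {ffun D -> bool}) d i :
  0 < i < order n d -> (forall j, j < order n d -> lab (iter j n d) = (j < i)) ->
  #|[set d' | (tail d' == tail d) && trans lab d']| = 2.
Proof.
move=> /andP [Hi0 Hio] Hl.
set o := order n d.
have Ho : 0 < o by apply: order_gt0.
have iter_eq k j : k < o -> j < o -> (iter k n d == iter j n d) = (k == j).
  by move=> Hk Hj; apply/eqP/eqP => [|->] //; apply: iter_inj_lt.
have Hl0 : lab d = true by move: (Hl 0 Ho) => /= ->.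
have Hio' : iter o n d = d by apply: iter_order; apply: n_inj.
have -> : [set d' | (tail d' == tail d) && trans lab d'] =
          [set iter i.-1 n d; iter o.-1 n d].
  apply/setP => d'; rewrite !inE.
  apply/idP/idP.
    case/andP => /eqP /tail_iterP [k Hk ->].
    rewrite !iter_eq; try lia.
    rewrite /trans -iterS.
    have [Hko|Hko] : k.+1 < o \/ k.+1 = o by lia.
      by rewrite !Hl //; lia.
    by rewrite Hko Hio' Hl0 Hl //; lia.
  case/orP => /eqP ->; rewrite tail_iter eqxx /= /trans -iterS.
    by rewrite (prednK Hi0) !Hl //; lia.
  by rewrite (prednK Ho) Hio' Hl0 Hl //; lia.
by rewrite cards2 iter_eq //; lia.
Qed.

Lemma pattern_lwlb rw rb lw lb : G2_pattern rw rb lw lb -> lw != lb.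
Proof.
by case=> [[c [_ [_ [[-> ->]|[-> ->]]]]]|[p [_ [-> [_ ->]]]]]; case: c || case: p.
Qed.

Lemma black_nonmono (lab : {ffun D -> bool}) : @G2 V D e n tail white lab ->
  forall d, ~~ white (tail d) -> lab d != lab (phi d).
Proof.
move=> H2 d Hb; have Hw : white (tail (e d)) by rewrite bip.
have := pattern_lwlb (H2 _ Hw); rewrite eK eq_sym.
by [].
Qed.

Lemma Olab_good lab :
  @gen_strong_labeling V F D e n tail face white outer s0 s1 lab ->
  @good_orientation V F D e tail face white s0 s1 (Olab lab).
Proof.
case=> [H0 [H1 [H2 H3]]]; split; first exact: Olab_orient.
case=> [v|[a|f]].
- rewrite (outdegV (@Olab_sub lab)).
  have -> : [set d | (tail d == v) && ((inl v, inr (inl (ed d))) \in Olab lab)] =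
            [set d | (tail d == v) && trans lab d].
    by apply/setP => d; rewrite inE [in RHS]inE; case: eqP => //= <-; apply: Olab_V.
  case: ifP => Hv.
    apply/eqP; rewrite cards_eq0; apply/eqP/setP => d; rewrite !inE.
    case: eqP => //= Hd; rewrite /trans.
    have [A B] := H0 d; have [A' B'] := H0 (n d); rewrite tail_n in A' B'.
    by case/orP: Hv => /eqP Hv; subst v; [rewrite A // A' | rewrite B // B'].
  move: Hv => /norP [Hv0 Hv1]; have [d [Hd [i [Hi Hl]]]] := H1 v Hv0 Hv1.
  by rewrite -Hd; apply: G1_count Hi Hl.
- rewrite (outdegE (@Olab_sub lab)) Olab_Ew Olab_Eb Olab_Ef.
  have := H2 (val a) (white_val a); rewrite /G2_pattern /trans /mono.
  rewrite -[n (e (val a))]/(phi (val a)).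
  move: (lab (val a)) (lab (phi (val a))) (lab (n (val a))) (lab (e (val a))) => rw rb lw lb.
  by case=> [[c [-> [-> [[-> ->]|[-> ->]]]]]|[p [-> [-> [-> ->]]]]]; case: c || case: p.
- rewrite (outdegF (@Olab_sub lab)).
  have -> : [set a : Ed | (face (val a) == f) && ((inr (inr f), inr (inl a)) \in Olab lab)] =
            [set a : Ed | (face (val a) == f) && mono lab (val a)].
    by apply/setP => a; rewrite inE [in RHS]inE; case: eqP => //= <-; apply: Olab_F.
  rewrite (card_Ed (fun d => (face d == f) && mono lab d)).
  case: H3 => [Hf _]; have [C0 C1] := Hf f.
  have -> : [set d | white (tail d) && ((face d == f) && mono lab d)] =
     [set d | (face d == f) && ~~ lab d && ~~ lab (phi d)] :|:
     [set d | (face d == f) && lab d && lab (phi d)].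
    apply/setP => d; rewrite !inE /mono.
    case Hw: (white (tail d)) => /=.
      by case: (face d == f); case: (lab d); case: (lab (phi d)).
    have := black_nonmono H2 (negbT Hw).
    by case: (face d == f); case: (lab d); case: (lab (phi d)).
  rewrite cardsU C0 C1.
  suff -> : [set d | (face d == f) && ~~ lab d && ~~ lab (phi d)] :&:
     [set d | (face d == f) && lab d && lab (phi d)] = set0 by rewrite cards0.
  by apply/setP => d; rewrite !inE; case: (lab d); rewrite ?andbF ?andbT.
Qed.

Lemma Olab_inj lab1 lab2 :
  @gen_strong_labeling V F D e n tail face white outer s0 s1 lab1 ->
  @gen_strong_labeling V F D e n tail face white outer s0 s1 lab2 ->
  Olab lab1 = Olab lab2 -> lab1 = lab2.
Proof.
case=> [A0 [_ [A2 _]]] [B0 [_ [B2 _]]] HO.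
have Ht d : trans lab1 d = trans lab2 d by rewrite -!Olab_V HO.
have Hm d : mono lab1 d = mono lab2 d.
  case Hw: (white (tail d)).
    by have := Olab_F lab1 (ed d); rewrite HO Olab_F val_ed Hw.
  rewrite /mono; have := black_nonmono A2 (negbT Hw); have := black_nonmono B2 (negbT Hw).
  by do 2 move/negbTE ->.
pose dl d := lab1 d (+) lab2 d.
have Hn d : dl (n d) = dl d.
  by move: (Ht d); rewrite /dl /trans; case: (lab1 d); case: (lab2 d);
     case: (lab1 (n d)); case: (lab2 (n d)).
have Hp d : dl (phi d) = dl d.
  by move: (Hm d); rewrite /dl /mono; case: (lab1 d); case: (lab2 d);
     case: (lab1 (phi d)); case: (lab2 (phi d)).
case: Hs0 => d0 [Hd0 _].
apply/ffunP => d; have := dart_const Hn Hp d d0.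
rewrite /dl (proj1 (A0 d0) Hd0) (proj1 (B0 d0) Hd0).
by case: (lab1 d); case: (lab2 d).
Qed.

Lemma tail_surj v : exists d, tail d = v.
Proof.
have /connectP [p Hp ->] := vconn s0 v.
case/lastP: p Hp => [|p x] /=; first by case: Hs0 => d [Hd _]; exists d.
rewrite rcons_path last_rcons => /andP [_ /existsP [d /andP [_ /eqP H]]].
by exists (e d).
Qed.

Lemma sum_ed (T : nmodType) (a : Ed) (G : D -> T) :
  (\sum_(d | ed d == a) G d = G (val a) + G (e (val a)))%R.
Proof.
have Hne : e (val a) != val a by apply: e_neq.
rewrite (bigD1 (val a)) ?ed_val //= (bigD1 (e (val a))) ?ed_e ?ed_val ?eqxx ?Hne //=.
rewrite big1 ?GRing.addr0 // => d /andP [/andP [Ha H1] H2].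
by move: Ha; rewrite ed_eq (negbTE H1) (negbTE H2).
Qed.

Section Cocycle.
Import GRing.Theory.
Local Open Scope ring_scope.

Lemma sum_Y (P : pred (D + D)) (G : D + D -> 'F_2) :
  \sum_(y | P y) G y = \sum_(d | P (inl d)) G (inl d) + \sum_(d | P (inr d)) G (inr d).
Proof. by rewrite big_sumType. Qed.

Lemma sum_C (P : pred SVt) (G : SVt -> 'F_2) :
  \sum_(c | P c) G c = \sum_(v | P (inl v)) G (inl v) +
    (\sum_(a | P (inr (inl a))) G (inr (inl a)) + \sum_(f | P (inr (inr f))) G (inr (inr f))).
Proof. by rewrite big_sumType /= big_sumType. Qed.

Lemma sum_false (T : finType) (G : T -> 'F_2) : \sum_(t | false) G t = 0.
Proof. by rewrite big_pred0. Qed.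

Lemma perm_sum0 (h : D -> D) (P : pred D) w : injective h -> (forall d, P (h d) = P d) ->
  \sum_(d | P d) (b2F (d == w) + b2F (h d == w)) = 0.
Proof.
move=> hi HP; rewrite big_split /=.
have -> : \sum_(d | P d) b2F (h d == w) = \sum_(d | P d) b2F (d == w).
  by rewrite [RHS](reindex_inj hi) /=; apply: eq_bigl => d; rewrite HP.
exact: F2_addK.
Qed.

End Cocycle.

Lemma card_Ed_half : (#|[set: Ed]|.*2 = #|D|)%N.
Proof.
have -> : #|[set: Ed]| = #|[set d | white (tail d)]|.
  rewrite (eq_card (B := [set a : Ed | predT (val a)])) ?card_Ed; last by move=> a; rewrite !inE.
  by apply: eq_card => d; rewrite !inE andbT.
rewrite -addnn -(cardsC [set d | white (tail d)]); congr addn.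
rewrite -(card_imset _ e_inj); apply: eq_card => d; rewrite !inE.
apply/imsetP/idP.
  by case=> d' Hd' ->; rewrite bip negbK; move: Hd'; rewrite inE.
by move=> Hd; exists (e d); rewrite ?eK // inE bip.
Qed.

Lemma face_even f : ~~ odd #|[set d | face d == f]|.
Proof.
rewrite -(cardsID [set d | white (tail d)]).
have -> : #|[set d | face d == f] :\: [set d | white (tail d)]| =
          #|[set d | face d == f] :&: [set d | white (tail d)]|.
  rewrite -[RHS](card_imset _ phi_inj); apply: eq_card => d; rewrite !inE.
  have Hc : cancel (finv phi) phi by apply: f_finv; apply: phi_inj.
  apply/idP/imsetP.
    case/andP => Hw /eqP Hf; exists (finv phi d); last by rewrite Hc.
    rewrite !inE -face_phi Hc Hf eqxx /=.
    by rewrite -(negbK (white (tail (finv phi d)))) -white_phi Hc.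
  case=> d' /setIP []; rewrite !inE => Hf Hw ->.
  by rewrite white_phi Hw face_phi Hf.
by rewrite addnn odd_double.
Qed.

Section Surj.
Variable O : {set SVt * SVt}.
Hypothesis HO : @good_orientation V F D e tail face white s0 s1 O.

Lemma O_sub x y : (x, y) \in O -> sadj x y.
Proof. by case: HO => [[H _] _]; apply: H. Qed.
Lemma O_ex x y : sadj x y -> ((y, x) \in O) = ~~ ((x, y) \in O).
Proof.
by case: HO => [[_ H] _] /H; case: ((x, y) \in O); case: ((y, x) \in O).
Qed.
Lemma O_deg x : outdeg O x =
    match x with
    | inl v => if (v == s0) || (v == s1) then 0 else 2
    | inr (inl _) => 1
    | inr (inr _) => 2
    end.
Proof. by case: HO => _ H; apply: H. Qed.

Definition tO d := (inl (tail d), inr (inl (ed d))) \in O.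
Definition moO d := white (tail d) && ((inr (inr (face d)), inr (inl (ed d))) \in O).

Lemma tO_count v : #|[set d | (tail d == v) && tO d]| =
  if (v == s0) || (v == s1) then 0 else 2.
Proof.
rewrite -(O_deg (inl v)) (outdegV O_sub); apply: eq_card => d; rewrite !inE.
by case: eqP => //= <-.
Qed.

Lemma edge_sum (a : Ed) : (~~ tO (val a) + ~~ tO (e (val a)) + ~~ moO (val a) = 1)%N.
Proof.
have := O_deg (inr (inl a)); rewrite (outdegE O_sub) => <-.
congr (_ + _ + _)%N.
- by rewrite /tO ed_val O_ex ?negbK //= eqxx.
- by rewrite /tO ed_e ed_val O_ex ?negbK //= eqxx orbT.
- by rewrite /moO white_val ed_val O_ex ?negbK //= eqxx.
Qed.

Lemma face_count f : #|[set d | (face d == f) && moO d]| = 2.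
Proof.
rewrite -(O_deg (inr (inr f))) (outdegF O_sub).
rewrite (eq_card (B := [set a : Ed | (face (val a) == f) &&
           ((inr (inr f), inr (inl (ed (val a)))) \in O)])); last first.
  by move=> a; rewrite !inE ed_val.
rewrite (card_Ed (fun d => (face d == f) && ((inr (inr f), inr (inl (ed d))) \in O))).
apply: eq_card => d; rewrite !inE /moO.
by case: (white _); case: eqP => //= ->.
Qed.

Section Solve.
Import GRing.Theory.
Local Open Scope ring_scope.

Definition srcY (y : D + D) := match y with inl d | inr d => d end.
Definition dstY (y : D + D) := match y with inl d => n d | inr d => phi d end.
Definition zC (c : SVt) (y : D + D) : bool :=
  match c, y with
  | inl v, inl d => tail d == v
  | inr (inl a), inl d | inr (inl a), inr d => ed d == a
  | inr (inr f), inr d => face d == f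
  | _, _ => false
  end.
Definition gY (y : D + D) : 'F_2 :=
  match y with inl d => b2F (tO d) | inr d => b2F (~~ moO d) end.

Lemma sum_b2F_set (P Q : pred D) :
  \sum_(d | P d) b2F (Q d) = b2F (odd #|[set d | P d && Q d]|).
Proof.
rewrite (eq_bigr (fun d => if Q d then 1 else 0)) => [|d _]; last by case: (Q d).
rewrite -big_mkcondr (eq_bigl (fun d => d \in [set d | P d && Q d])) => [|d]; last by rewrite inE.
by rewrite sumr_const /b2F -modn2 (Fp_nat_mod (isT : prime 2)).
Qed.

Lemma exists_x : exists x : D -> 'F_2, forall y, x (srcY y) + x (dstY y) = gY y.
Proof.
apply: (@cocycle_solve D (D + D)%type SVt srcY dstY zC gY).
- move=> x Hx a b; apply: dart_const => d.
    by have := Hx (inl d); rewrite /= => ->.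
  by have := Hx (inr d); rewrite /= => ->.
- case=> [v|[a|f]] w; rewrite sum_Y /= ?sum_false ?addr0 ?add0r.
  + by apply: perm_sum0 => [|d]; [exact: n_inj | rewrite tail_n].
  + rewrite !sum_ed phi_e -[n (e (val a))]/(phi (val a)).
    move: (val a == w) (n (val a) == w) (e (val a) == w) (phi (val a) == w).
    by do 4 case; apply/eqP.
  + by apply: perm_sum0 => [|d]; [exact: phi_inj | rewrite face_phi].
- move=> u Hu.
  have H1 d : u (inl (tail d)) = u (inr (inl (ed d))).
    have := Hu (inl d); rewrite sum_C /= sum_false addr0.
    rewrite (big_pred1 (tail d)) => [|v]; last by rewrite /= eq_sym.
    rewrite (big_pred1 (ed d)) => [|a]; last by rewrite /= eq_sym.
    by move/eqP; rewrite F2_add_eq0 => /eqP.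
  have H2 d : u (inr (inr (face d))) = u (inr (inl (ed d))).
    have := Hu (inr d); rewrite sum_C /= sum_false add0r.
    rewrite (big_pred1 (ed d)) => [|a]; last by rewrite /= eq_sym.
    rewrite (big_pred1 (face d)) => [|f]; last by rewrite /= eq_sym.
    by move/eqP; rewrite F2_add_eq0 => /eqP /esym.
  have Hc : forall d d', u (inl (tail d)) = u (inl (tail d')).
    apply: dart_const => d; first by rewrite tail_n.
    by rewrite tail_phi H1 ed_e -H1.
  case: Hs0 => d0 _.
  have Hall c : u c = u (inl (tail d0)).
    case: c => [v|[a|f]].
    + by case: (tail_surj v) => d <-; apply: Hc.
    + by rewrite -(ed_val a) -H1; apply: Hc.
    + by case: (face_surj f) => d <-; rewrite H2 -H1; apply: Hc.
  by move=> a b; rewrite !Hall.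
- case=> [v|[a|f]]; rewrite sum_Y /= ?sum_false ?addr0 ?add0r.
  + by rewrite sum_b2F_set tO_count; case: ifP.
  + rewrite !sum_ed /moO bip white_val /= -b2F_addb -b2F_addb -b2F_addb.
    have := edge_sum a; rewrite /moO white_val /=.
    by case: (tO (val a)); case: (tO (e (val a))); case: (_ \in O).
  + rewrite sum_b2F_set.
    have := face_even f; rewrite -(cardsID [set d | moO d]).
    have -> : [set d | face d == f] :&: [set d | moO d] = [set d | (face d == f) && moO d].
      by apply/setP => d; rewrite !inE.
    rewrite face_count.
    have -> : [set d | face d == f] :\: [set d | moO d] =
              [set d | (face d == f) && ~~ moO d].
      by apply/setP => d; rewrite !inE andbC.
    by rewrite oddD /= => /negbTE ->.
- have -> : #|{: D + D}| = (#|D| + #|D|)%N by apply: card_sum.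
  have -> : #|{: SVt}| = (#|V| + (#|[set: Ed]| + #|F|))%N.
    by rewrite /SV card_sum card_sum cardsT.
  have := euler; have := card_Ed_half.
  lia.
Qed.

End Solve.

Lemma exists_lab : exists lab : {ffun D -> bool},
  [/\ forall d, lab (n d) = lab d (+) tO d,
      forall d, lab (phi d) = lab d (+) ~~ moO d &
      exists d0, tail d0 = s0 /\ lab d0 = false].
Proof.
have [x Hx] := exists_x.
pose L0 d := x d != 0%R.
have HL d : x d = b2F (L0 d) by rewrite /L0; case: (F2_cases (x d)) => ->.
have Hn d : L0 (n d) = L0 d (+) tO d.
  apply: b2F_inj; have := Hx (inl d); rewrite /= !HL b2F_addb => <-.
  by rewrite GRing.addrA F2_addK GRing.add0r.
have Hp d : L0 (phi d) = L0 d (+) ~~ moO d.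
  apply: b2F_inj; have := Hx (inr d); rewrite /= !HL b2F_addb => <-.
  by rewrite GRing.addrA F2_addK GRing.add0r.
case: Hs0 => d0 [Hd0 _].
exists [ffun d => L0 d (+) L0 d0]; split.
- by move=> d; rewrite !ffunE Hn -!addbA (addbC (tO d)).
- by move=> d; rewrite !ffunE Hp -!addbA (addbC (~~ moO d)).
- by exists d0; rewrite ffunE addbb.
Qed.

Section LabProps.
Variable lab : {ffun D -> bool}.
Hypothesis Ln : forall d, lab (n d) = lab d (+) tO d.
Hypothesis Lp : forall d, lab (phi d) = lab d (+) ~~ moO d.
Variable d0 : D.
Hypothesis Hd0 : tail d0 = s0.
Hypothesis L0 : lab d0 = false.

Lemma trans_tO d : trans lab d = tO d.
Proof. by rewrite /trans Ln; case: (lab d); case: (tO d). Qed.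
Lemma mono_moO d : mono lab d = moO d.
Proof. by rewrite /mono Lp; case: (lab d); case: (moO d). Qed.

Lemma Olab_O : Olab lab = O.
Proof.
apply/setP => -[x y]; rewrite inE /=.
case Hs: (sadj x y); last first.
  by symmetry; apply/negbTE/negP => /O_sub; rewrite Hs.
rewrite /=.
have Hv (v : V) (b : Ed) : sadj (inl v) (inr (inl b)) ->
    varc lab v b = ((inl v, inr (inl b)) \in O).
  rewrite /= => /orP [] /eqP <-.
    by have := varc_tail lab (val b); rewrite ed_val => ->; rewrite trans_tO /tO ed_val.
  have := varc_tail lab (e (val b)); rewrite ed_e ed_val => ->.
  by rewrite trans_tO /tO ed_e ed_val.
have Hf (f : F) (b : Ed) : sadj (inr (inr f)) (inr (inl b)) ->
    mono lab (val b) = ((inr (inr f), inr (inl b)) \in O).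
  by rewrite /= => /eqP <-; rewrite mono_moO /moO white_val ed_val.
case: x y Hs => [v|[a|f]] [w|[b|g]] //= Hs.
- by apply: Hv.
- by rewrite O_ex -?Hv // sadj_sym.
- by rewrite O_ex -?Hf // sadj_sym.
- by apply: Hf.
Qed.

Lemma no_tO_special s d : (s == s0) || (s == s1) -> tail d = s -> tO d = false.
Proof.
move=> Hs Hd; have := tO_count s; rewrite Hs => /eqP; rewrite cards_eq0 => /eqP /setP /(_ d).
by rewrite !inE Hd eqxx.
Qed.

Lemma lab_iter_const s d k : (s == s0) || (s == s1) -> tail d = s ->
  lab (iter k n d) = lab d.
Proof.
move=> Hs Hd; elim: k => //= k IH.
by rewrite Ln (no_tO_special Hs) ?tail_iter // addbF.
Qed.

Lemma lab_special s d d' : (s == s0) || (s == s1) -> tail d = s -> tail d' = s ->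
  lab d = lab d'.
Proof.
move=> Hs Hd Hd'; have [k _ ->] := @tail_iterP d d' (etrans Hd' (esym Hd)).
by rewrite (lab_iter_const _ Hs Hd).
Qed.

Lemma G1_lab v : v != s0 -> v != s1 -> exists d, tail d = v /\
  exists i, 0 < i < order n d /\
    forall j, j < order n d -> lab (iter j n d) = (j < i).
Proof.
move=> H0 H1; have Hc := tO_count v; rewrite (negbTE H0) (negbTE H1) /= in Hc.
set T := [set d | (tail d == v) && tO d] in Hc.
have HT d : tail d = v -> (d \in T) = tO d by move=> Hd; rewrite inE Hd eqxx.
have [t /and3P [/eqP Htv Ht0 Ht1]] : exists t, [&& tail t == v, ~~ lab t & lab (n t)].
  case: (boolP [exists t, [&& tail t == v, ~~ lab t & lab (n t)]]) => [/existsP //|].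
  rewrite negb_exists => /forallP Hn.
  pose A1 := [set d | (tail d == v) && lab d].
  pose A2 := [set d | (tail d == v) && lab (n d)].
  have sub : A2 \subset A1.
    apply/subsetP => d; rewrite /A1 /A2 !inE => /andP [Hd Hl]; rewrite Hd /=.
    by move: (Hn d); rewrite Hd Hl /= andbT negbK.
  have cardA : #|A1| <= #|A2|.
    rewrite -[#|A2|](card_imset _ n_inj); apply: subset_leq_card; apply/subsetP => d.
    rewrite /A1 /A2 !inE => /andP [/eqP Hd Hl]; apply/imsetP; exists (finv n d).
      by rewrite inE -tail_n f_finv ?Hd ?eqxx ?Hl //; apply: n_inj.
    by rewrite f_finv //; apply: n_inj.
  have /eqP Heq : A2 == A1 by rewrite eqEcard sub cardA.
  have : T == set0.
    apply/eqP/setP => d; rewrite !inE.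
    case: (tail d =P v) => //= Hd; rewrite -trans_tO /trans.
    move: (Hn d); rewrite Hd eqxx /=.
    case Hl: (lab d) => /=; last by case: (lab (n d)).
    move=> _; have : d \in A1 by rewrite inE Hd Hl eqxx.
    by rewrite -Heq inE => /andP [_ ->].
  by rewrite -cards_eq0 Hc.
pose d := n t; pose o := order n d.
have Ho : 0 < o by apply: order_gt0.
have Htt : iter o.-1 n d = t.
  apply: n_inj; rewrite -iterS prednK // iter_order //; exact: n_inj.
have HtT : t \in T by rewrite HT // -trans_tO /trans (negbTE Ht0) Ht1.
have [t' Ht'] : exists t', T :\ t = [set t'].
  apply/cards1P; move: Hc; rewrite (cardsD1 t) HtT; lia.
have Ht'T : t' \in T :\ t by rewrite Ht' set11.
move: (Ht'T); rewrite !inE => /andP [Hne /andP [/eqP Ht'v _]].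
have Hdv : tail d = v by rewrite tail_n.
have [j2 Hj2 Ht'e] := @tail_iterP d t' (etrans Ht'v (esym Hdv)).
have Hj2o : j2 != o.-1.
  apply/eqP => Hj; move: Hne; rewrite Ht'e Hj Htt eqxx //.
have HinT j : j < o -> (iter j n d \in T) = (j == j2) || (j == o.-1).
  move=> Hj; apply/idP/idP.
    move=> Hin; case: (iter j n d =P t) => [He|Hne'].
      by apply/orP; right; apply/eqP; apply: (iter_inj_lt Hj); rewrite ?prednK ?leqnn // He Htt.
    have : iter j n d \in T :\ t by rewrite in_setD1 Hin andbT; apply/eqP.
    rewrite Ht' inE Ht'e => /eqP /(iter_inj_lt Hj Hj2) ->; by rewrite eqxx.
  case/orP => /eqP ->; first by rewrite -Ht'e; move: Ht'T; rewrite in_setD1 => /andP [].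
  by rewrite Htt.
have Hlab j : j < o -> lab (iter j n d) = (j <= j2).
  elim: j => [|j IH] Hj; first by rewrite /= /d Ht1.
  rewrite iterS Ln IH; last by apply: ltnW.
  rewrite -HT ?tail_iter // HinT; last by apply: ltnW.
  have -> : (j == o.-1) = false by apply/negbTE; lia.
  by case: (ltngtP j j2) => H; rewrite ?H /=; lia.
exists d; split => //; exists j2.+1; split; first by move: Hj2o Hj2; lia.
by move=> j Hj; rewrite Hlab.
Qed.

Lemma G2_lab : @G2 V D e n tail white lab.
Proof.
move=> d Hw; have := edge_sum (ed d); rewrite val_ed Hw.
rewrite /G2_pattern.
have E1 := Ln d; have E2 := Lp d; have E3 := Ln (e d).
rewrite -[n (e d)]/(phi d) in E3.
rewrite E1 E2; move: E3; rewrite E2.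
move: (lab d) (lab (e d)) (tO d) (tO (e d)) (moO d) => rw lb t1 t2 m.
by case: rw; case: lb; case: t1; case: t2; case: m => //= _ _;
   first [by left; exists true; split; [|split]; [| |by left] |
          by left; exists true; split; [|split]; [| |by right] |
          by left; exists false; split; [|split]; [| |by left] |
          by left; exists false; split; [|split]; [| |by right] |
          by right; exists true | by right; exists false].
Qed.

Lemma iter_phi_inj x i j : i < order phi x -> j < order phi x ->
  iter i phi x = iter j phi x -> i = j.
Proof. by move=> Hi Hj H; rewrite -(findex_iter Hi) -(findex_iter Hj) H. Qed.

Lemma face_iter k d : face (iter k phi d) = face d.
Proof. by elim: k => //= k IH; rewrite face_phi. Qed.
Lemma white_iter k d : white (tail (iter k phi d)) = white (tail d) (+) odd k.
Proof.
elim: k => [|k IH] /=; first by rewrite addbF.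
by rewrite white_phi IH; case: (white _); case: (odd k).
Qed.

Lemma moO_white d : moO d -> white (tail d).
Proof. by case/andP. Qed.

Lemma face_parity m0 m1 : face m0 = face m1 -> m0 != m1 -> moO m0 -> moO m1 ->
  (forall d, face d = face m0 -> moO d -> d = m0 \/ d = m1) ->
  lab m1 = ~~ lab m0.
Proof.
move=> Hf Hne M0 M1 Honly.
have Hc : fconnect phi m0 m1 by apply: face_conn.
set j := findex phi m0 m1.
have Hj : j < order phi m0 by apply: findex_max.
have Hjm : iter j phi m0 = m1 by apply: iter_findex.
have Hj0 : 0 < j.
  by rewrite lt0n; apply/eqP => H; move: Hne; rewrite -Hjm H eqxx.
have Hev : odd j = false.
  have := white_iter j m0; rewrite Hjm (moO_white M0) (moO_white M1).
  by case: (odd j).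
have Hl i : 0 < i <= j -> lab (iter i phi m0) = lab m0 (+) ~~ odd i.
  elim: i => [|i IH]; first by rewrite ltnn.
  case/andP => _ Hij.
  rewrite Lp; case: (posnP i) => [->|Hi0] /=.
    by rewrite (negbTE (_ : ~~ ~~ moO m0)) ?negbK // addbF.
  rewrite IH ?Hi0 ?(ltnW Hij) //.
  have -> : moO (iter i phi m0) = false.
    apply/negbTE/negP => Mi.
    have := Honly _ (face_iter i m0) Mi; case=> Heq.
      by have := @iter_phi_inj m0 i 0 (ltn_trans Hij Hj) (order_gt0 _ _) Heq; lia.
    by have := @iter_phi_inj m0 i j (ltn_trans Hij Hj) Hj (etrans Heq (esym Hjm)); lia.
  by case: (lab m0); case: (odd i).
have := Hl j; rewrite Hjm Hj0 leqnn Hev => /(_ isT).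
by rewrite addbT.
Qed.

Lemma two_elems (M : {set D}) m0 m1 : #|M| = 2 -> m0 \in M -> m1 \in M -> m0 != m1 ->
  forall d, d \in M -> d = m0 \/ d = m1.
Proof.
move=> HM H0 H1 Hne d Hd.
have /eqP Heq : [set m0; m1] == M.
  rewrite eqEcard HM cards2 Hne andbT; apply/subsetP => x /set2P [] ->; done.
by move: Hd; rewrite -Heq => /set2P.
Qed.

Lemma mset2 f : exists m0 m1, [/\ m0 != m1, face m0 = f /\ face m1 = f, moO m0, moO m1 &
  forall d, face d = f -> moO d -> d = m0 \/ d = m1].
Proof.
have Hc := face_count f; set M := [set d | (face d == f) && moO d] in Hc.
have : M != set0 by rewrite -card_gt0 Hc.
case/set0Pn => m0 Hm0.
have [m1 Hm1] : exists m1, M :\ m0 = [set m1].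
  by apply/cards1P; move: Hc; rewrite (cardsD1 m0) Hm0; lia.
have : m1 \in M :\ m0 by rewrite Hm1 set11.
rewrite in_setD1 => /andP [Hne Hm1M].
move: (Hm0) (Hm1M); rewrite !inE => /andP [/eqP Hf0 M0] /andP [/eqP Hf1 M1].
exists m0, m1; split => //; first by rewrite eq_sym.
move=> d Hd Md; apply: (two_elems Hc) => //; first by rewrite eq_sym.
by rewrite inE Hd eqxx.
Qed.

Lemma G3_face f :
  #|[set d | (face d == f) && ~~ lab d && ~~ lab (phi d)]| = 1 /\
  #|[set d | (face d == f) && lab d && lab (phi d)]| = 1.
Proof.
have [m0 [m1 [Hne [Hf0 Hf1] M0 M1 Honly]]] := mset2 f.
have Hp := face_parity (etrans Hf0 (esym Hf1)) Hne M0 M1.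
have Hp' : lab m1 = ~~ lab m0 by apply: Hp => d Hd; apply: Honly; rewrite Hd.
have key (c : bool) : [set d | (face d == f) && (lab d == c) && (lab (phi d) == c)] =
    [set if lab m0 == c then m0 else m1].
  apply/setP => d; rewrite !inE Lp.
  apply/idP/eqP.
    case/andP => /andP [/eqP Hd /eqP Hl] Hpl.
    have Md : moO d by move: Hpl; rewrite Hl; move: (moO d) (c) => m c'; case: m; case: c'.
    case: (Honly d Hd Md) => Hdm; subst d; case: (lab m0 =P c) => // Hc.
    by move: Hl; rewrite Hp' Hc; case: (c).
  case: (lab m0 =P c) => Hc ->.
    by rewrite Hf0 eqxx M0 Hc /= addbF eqxx.
  rewrite Hf1 eqxx M1 /= addbF Hp'.
  by case: (lab m0) Hc; case: c.
split.
  have -> : [set d | (face d == f) && ~~ lab d && ~~ lab (phi d)] =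
      [set d | (face d == f) && (lab d == false) && (lab (phi d) == false)].
    by apply/setP => d; rewrite !inE !eqbF_neg.
  by rewrite key cards1.
have -> : [set d | (face d == f) && lab d && lab (phi d)] =
    [set d | (face d == f) && (lab d == true) && (lab (phi d) == true)].
  by apply/setP => d; rewrite !inE !eqb_id.
by rewrite key cards1.
Qed.

Lemma special_mono s d : (s == s0) || (s == s1) -> white (tail d) ->
  tail d = s \/ tail (e d) = s -> moO d.
Proof.
move=> Hs Hw H; have := edge_sum (ed d); rewrite val_ed Hw.
case: H => H; rewrite (no_tO_special Hs H) /=;
  by case: (tO _); case: (moO d).
Qed.

Lemma no_both d : tail d = s0 -> tail (e d) = s1 -> False.
Proof.
move=> H0 H1; have := edge_sum (ed d); rewrite val_ed.
have T0 := no_tO_special (s := s0) (d := d); have T1 := no_tO_special (s := s1) (d := e d).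
by case: ifP => _; rewrite ?eK T0 ?T1 ?eqxx ?orbT.
Qed.

Lemma outer_m s : (s == s0) || (s == s1) -> (exists d, tail d = s /\ face d = outer) ->
  exists m, [/\ white (tail m), face m = outer, moO m, tail m = s \/ tail (e m) = s &
             forall d, tail d = s -> lab d = lab m].
Proof.
move=> Hs [ds [Hds Hf]]; case Hw: (white (tail ds)).
  exists ds; split => //; first by apply: (special_mono Hs) => //; left.
    by left.
  by move=> d Hd; apply: (lab_special Hs).
have Hc : cancel (finv phi) phi by apply: f_finv; apply: phi_inj.
pose m := finv phi ds.
have Hm : phi m = ds by apply: Hc.
have Hwm : white (tail m) by rewrite -[white _]negbK -white_phi Hm Hw.
have Htm : tail (e m) = s by rewrite -tail_phi Hm.
have Mm : moO m by apply: (special_mono Hs) => //; right.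
exists m; split => //; first by rewrite -face_phi Hm.
  by right.
move=> d Hd; rewrite (lab_special Hs Hd Hds) -Hm Lp Mm /=.
by rewrite addbF.
Qed.

Lemma GSL_lab : @gen_strong_labeling V F D e n tail face white outer s0 s1 lab.
Proof.
have Hs0' : (s0 == s0) || (s0 == s1) by rewrite eqxx.
have Hs1' : (s1 == s0) || (s1 == s1) by rewrite eqxx orbT.
have [m0 [W0 F0 M0 E0 L0']] := outer_m Hs0' Hs0.
have [m1 [W1 F1 M1 E1 L1']] := outer_m Hs1' Hs1.
have Hne : m0 != m1.
  apply/eqP => Heq; subst m1.
  case: E0 => E0; case: E1 => E1.
  - by move: Hs01; rewrite -E0 -E1 eqxx.
  - exact: (no_both E0 E1).
  - apply: (no_both (d := e m0)); by rewrite ?eK.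
  - by move: Hs01; rewrite -E0 -E1 eqxx.
have Hm0 : lab m0 = false by rewrite -(L0' d0).
have [mm0 [mm1 [_ _ _ _ Honly]]] := mset2 outer.
have Hlab1 : lab m1 = true.
  have -> : lab m1 = ~~ lab m0.
    apply: face_parity => //; first by rewrite F0 F1.
    have Hc := face_count outer.
    move=> d Hd Md; apply: (two_elems Hc) => //; rewrite inE ?Hd ?F0 ?F1 ?eqxx //.
  by rewrite Hm0.
split; [|split; [|split]].
- move=> d; split => Hd; [by rewrite L0' | by rewrite L1'].
- by move=> v; apply: G1_lab.
- exact: G2_lab.
- split; first by move=> f; apply: G3_face.
  exists m0; split => //; split => //; split => //; split => //.
  by rewrite Lp M0 /= addbF.
Qed.

End LabProps.

End Surj.

End Main.

Theorem proposition33 (V F D : finType) (e n : D -> D) (tail : D -> V)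
    (face : D -> F) (white : V -> bool) (outer : F) (s0 s1 : V) :
  @plane_bipartite_map V F D e n tail face white ->
  s0 != s1 ->
  (exists d, tail d = s0 /\ face d = outer) ->
  (exists d, tail d = s1 /\ face d = outer) ->
  exists f : {lab : {ffun D -> bool} |
                @gen_strong_labeling V F D e n tail face white outer s0 s1 lab} ->
             {O : {set @SV V F D tail white * @SV V F D tail white} |
                @good_orientation V F D e tail face white s0 s1 O},
    bijective f.
Proof.
move=> Hmap Hs01 Hs0 Hs1.
have Hsurj : forall O, @good_orientation V F D e tail face white s0 s1 O ->
    exists lab, @gen_strong_labeling V F D e n tail face white outer s0 s1 lab /\
                Olab e n tail face white lab = O.
  move=> O HO; have [lab [Ln Lp [d0 [Hd0 L0]]]] := exists_lab Hmap Hs01 Hs0 HO.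
  exists lab; split; first exact: (GSL_lab Hs01 Hs0 Hs1 HO Ln Lp Hd0 L0).
  exact: (Olab_O HO Ln Lp).
exists (fun x => exist _ (Olab e n tail face white (sval x)) (Olab_good Hmap Hs01 (proj2_sig x))).
pose g (y : {O : {set @SV V F D tail white * @SV V F D tail white} |
                @good_orientation V F D e tail face white s0 s1 O}) :=
  let s := constructive_indefinite_description _ (Hsurj _ (proj2_sig y)) in
  exist (fun lab => @gen_strong_labeling V F D e n tail face white outer s0 s1 lab)
    (proj1_sig s) (proj1 (proj2_sig s)).
exists g.
- case=> lab Hlab; rewrite /g /=.
  case: (constructive_indefinite_description _ _) => lab' [Hl' Heq] /=.
  have E := Olab_inj Hmap Hs0 Hl' Hlab Heq; subst lab'.
  by f_equal; apply: proof_irrelevance.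
- case=> O HO; rewrite /g /=.
  case: (constructive_indefinite_description _ _) => lab' [Hl' Heq] /=.
  subst O; by f_equal; apply: proof_irrelevance.
Qed.
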